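(* Let $\lambda$ be a weak Perron number and let $f_\lambda:\ast_{Nn}\to\ast_{Nn}$ be the star map constructed below. Then its split map $S(f_\lambda):S(\ast_{Nn})\to S(\ast_{Nn})$ is ergodic; i.e. for each pair of edges $y_I,z_J$ of $S(\ast_{Nn})$ there exists $L$ such that the edge path $S(f_\lambda)^L(y_I)$ traverses $z_J$.
   Context: A weak Perron number is a real algebraic integer $\lambda$ with $\lambda\ge|\lambda_i|$ for all Galois conjugates; a Perron number satisfies the strict inequality for all conjugates other than itself. Let $N$ be a positive integer such that $\mu=\lambda^N$ is Perron, and let $f_\mu:\ast_n\to\ast_n$ (with its edge lengths) be the star map constructed for the Perron number $\mu$ as follows: with $\mathcal{O}_\mu$ the ring of integers of $\mathbb{Q}(\mu)$, $V_\mu=\mathbb{Q}(\mu)\otimes\mathbb{R}$, unit eigenvectors $v_1$ (eigenvalue $\mu$), $v_2,\dots$ of multiplication by $\mu$, cone $K_\mu=\{\sum a_iv_i:a_1>0,a_1>|a_i|\}$, a rational closed convex polyhedral cone $KR_\mu$ generated by elements of $\mathcal{O}_\mu$ with $\mu K_\mu\subset KR_\mu\subset K_\mu$, semigroup $(\mathcal{O}_\mu\cap KR_\mu)\setminus\{0\}$ generated by $s_1,\dots,s_m$; positive integers $N'>n_0$ with $\mu^{N'}\equiv\mu^{n_0}\pmod{2\mathcal{O}_\mu}$; an integer $M=p(N'-n_0)+N'$ and nonnegative integers $e^{(k)}_i$ with $\mu^Ms_k=\sum_i(2e^{(k)}_i+2)s_i+2\mu s_k+\mu^{n_0}s_k$;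 $n=mM$, edges $(s_k,i)$ of length $\mu^{i-1}s_k$; $f_\mu$ fixes the center, maps $(s_k,i)\mapsto(s_k,i+1)$ for $i<M$, and maps $(s_k,M)$ to the path traversing $(s_k,1)$ back and forth $e^{(k)}_k+1$ times, then each $(s_j,1)$, $j\ne k$ (in some fixed order), back and forth $e^{(k)}_j+1$ times, then $(s_k,2)$ out and back once, then $(s_k,n_0+1)$ once. Now $\ast_{Nn}$ is formed by gluing $N$ copies $C^0,\dots,C^{N-1}$ of $\ast_n$ at their centers; edge $(i,j)$ is the copy in $C^i$ of edge $j$ of $\ast_n$, with length $\lambda^i$ times the length of $j$. The map $f_\lambda$ sends $(i,j)\mapsto(i+1,j)$ for $i<N-1$, and sends $(N-1,j)$ to the copy in $C^0$ of the edge path $f_\mu(j)$. Split map: prototype $P_7$ with edges $a,\dots,g$ from $v_0$ to $v_1$ (uppercase = reversed), $\phi_1=\mathrm{id}$, and for $m'\ge0$, $\phi_{3+2m'}$: $a\mapsto aG(aB)^{m'}a$, $b\mapsto bD(bC)^{m'}b$, $c\mapsto cF(cA)^{m'}c$, $d\mapsto aB(aB)^{m'}a$, $e\mapsto cB(aB)^{m'}a$, $f\mapsto aC(aB)^{m'}a$, $g\mapsto bE(bA)^{m'}b$. The split graph replaces each edge $x_I$ (oriented center to tip) by seven parallel edges $a_I,\dots,g_I$; the split map sends $y_I$ to the path obtained from the word $\phi_\ell(y)$, $\ell$ the number of edges of $f_\lambda(x_I)$, by giving its $t$-th letter the subscript of the $t$-th edge of $f_\lambda(x_I)$. *)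

(* Defs.v *)
From HB Require Import structures.
From mathcomp Require Import all_boot all_order all_algebra all_field.
Set Implicit Arguments. Unset Strict Implicit. Unset Printing Implicit Defensive.
Import Order.TTheory GRing.Theory Num.Theory.
Local Open Scope ring_scope.

Definition conjugate (x z : algC) : Prop := root (minCpoly x) z.

Definition weak_perron (l : algC) : Prop :=
  [/\ l \is Num.real, l \in Aint & forall z, conjugate l z -> `|z| <= l].

Definition perron (l : algC) : Prop :=
  weak_perron l /\ (forall z, conjugate l z -> z != l -> `|z| < l).

Definition inQF (mu x : algC) : Prop :=
  exists p : {poly rat}, x = (map_poly ratr p).[mu].

Definition inO (mu x : algC) : Prop := x \in Aint /\ inQF mu x.

(* Cone K_mu, at the points of Q(mu): the coordinate of x along the
   eigenvector for the conjugate z of mu is sigma_z(x) = p(z) where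
   x = p(mu); condition a_1 > 0 and a_1 > |a_i|. *)
Definition inK (mu x : algC) : Prop :=
  exists p : {poly rat}, x = (map_poly ratr p).[mu] /\ 0 < x /\
    forall z, conjugate mu z -> z != mu -> `|(map_poly ratr p).[z]| < x.

(* The points of Q(mu) in the closed convex cone generated by r_0..r_{q-1}
   (for a rational cone these are the nonnegative rational combinations) *)
Definition inQcone (r : nat -> algC) (q : nat) (x : algC) : Prop :=
  exists c : nat -> rat, (forall j, 0 <= c j) /\
    x = \sum_(j < q) ratr (c j) * r j.

Local Close Scope ring_scope.

(* an edge path is a sequence of edges with orientation
   (true = traversed in its own direction, false = reversed) *)
Definition rev_path (E : Type) (p : seq (E * bool)) : seq (E * bool) :=
  rev [seq (x.1, ~~ x.2) | x <- p].

Definition apply_map (E : Type) (g : E -> seq (E * bool)) (p : seq (E * bool))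
  : seq (E * bool) :=
  flatten [seq if x.2 then g x.1 else rev_path (g x.1) | x <- p].

Definition traverses (E : eqType) (g : E -> seq (E * bool)) (L : nat) (y z : E)
  : bool := z \in [seq x.1 | x <- iter L (apply_map g) [:: (y, true)]].

Definition ergodic (E : eqType) (valid : pred E) (g : E -> seq (E * bool)) : Prop :=
  forall y z, valid y -> valid z -> exists L, traverses g L y z.

Definition bf (E : Type) (x : E) : seq (E * bool) := [:: (x, true); (x, false)].
Definition rep (E : Type) (n : nat) (p : seq (E * bool)) := flatten (nseq n p).

(* Edges of *_n : (k, i) = edge (s_k, i), 0 <= k < m, 1 <= i <= M.
   e k i = e^{(k)}_i ; ordk k = the fixed order of the j <> k. *)
Definition f_mu (M n0 : nat) (e : nat -> nat -> nat) (ordk : nat -> seq nat)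
  (x : nat * nat) : seq ((nat * nat) * bool) :=
  let: (k, i) := x in
  if i < M then [:: ((k, i.+1), true)]
  else rep (e k k).+1 (bf (k, 1%N))
       ++ flatten [seq rep (e k j).+1 (bf (j, 1%N)) | j <- ordk k]
       ++ bf (k, 2%N) ++ [:: ((k, n0.+1), true)].

(* Edges of *_{Nn} : (c, (k, i)) = copy in C^c of edge (s_k, i), 0 <= c < N. *)
Definition valid_edge (N m M : nat) (x : nat * (nat * nat)) : bool :=
  [&& x.1 < N, x.2.1 < m, 0 < x.2.2 & x.2.2 <= M].

Definition f_lambda (N M n0 : nat) (e : nat -> nat -> nat) (ordk : nat -> seq nat)
  (x : nat * (nat * nat)) : seq ((nat * (nat * nat)) * bool) :=
  if x.1.+1 < N then [:: ((x.1.+1, x.2), true)]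
  else [seq ((0%N, y.1), y.2) | y <- f_mu M n0 e ordk x.2].

Inductive letter := La | Lb | Lc | Ld | Le | Lf | Lg.

Definition letter_eqb (x y : letter) : bool :=
  match x, y with
  | La, La | Lb, Lb | Lc, Lc | Ld, Ld | Le, Le | Lf, Lf | Lg, Lg => true
  | _, _ => false end.
Lemma letter_eqP : Equality.axiom letter_eqb.
Proof. by case; case; constructor. Qed.
HB.instance Definition _ := hasDecEq.Build letter letter_eqP.

(* letters of a word: (letter, lowercase?) ; uppercase = reversed *)
Definition lo (y : letter) := (y, true).
Definition up (y : letter) := (y, false).

Definition phi_odd (m' : nat) (y : letter) : seq (letter * bool) :=
  match y with
  | La => [:: lo La; up Lg] ++ rep m' [:: lo La; up Lb] ++ [:: lo La]
  | Lb => [:: lo Lb; up Ld] ++ rep m' [:: lo Lb; up Lc] ++ [:: lo Lb]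
  | Lc => [:: lo Lc; up Lf] ++ rep m' [:: lo Lc; up La] ++ [:: lo Lc]
  | Ld => [:: lo La; up Lb] ++ rep m' [:: lo La; up Lb] ++ [:: lo La]
  | Le => [:: lo Lc; up Lb] ++ rep m' [:: lo La; up Lb] ++ [:: lo La]
  | Lf => [:: lo La; up Lc] ++ rep m' [:: lo La; up Lb] ++ [:: lo La]
  | Lg => [:: lo Lb; up Le] ++ rep m' [:: lo Lb; up La] ++ [:: lo Lb]
  end.

(* phi_l; only l = 1 and odd l >= 3 are defined in the prototype
   (these are the only lengths that occur); other lengths give [::]. *)
Definition phi (l : nat) (y : letter) : seq (letter * bool) :=
  if l == 1%N then [:: lo y]
  else if odd l && (3 <= l) then phi_odd (l - 3)./2 y else [::].

Definition split_map (E : Type) (g : E -> seq (E * bool)) (x : letter * E)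
  : seq ((letter * E) * bool) :=
  let: (y, xI) := x in
  let w := g xI in
  [seq ((t.1.1, t.2.1), t.1.2) | t <- zip (phi (size w) y) w].

Definition split_valid (N m M : nat) (x : letter * (nat * (nat * nat))) : bool :=
  valid_edge N m M x.2.

(* Main.v *)
Require Import Defs.
From HB Require Import structures.
From mathcomp Require Import all_boot all_order all_algebra all_field.
From mathcomp Require Import zify.
Import Order.TTheory GRing.Theory Num.Theory.
Set Implicit Arguments. Unset Strict Implicit. Unset Printing Implicit Defensive.

Section Gen.
Variable E : eqType.
Variable g : E -> seq (E * bool).

Lemma mem_apply p w : (w \in [seq x.1 | x <- apply_map g p]) =
  has (fun x => w \in [seq u.1 | u <- g x.1]) p.
Proof.
elim: p => [|x p IH] //=. rewrite /apply_map /= map_cat mem_cat -/(apply_map g p) IH.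
case: x.2 => //. rewrite /rev_path map_rev mem_rev -map_comp. done.
Qed.

Definition reach y z := exists L, traverses g L y z.

Lemma reach_refl y : reach y y.
Proof. by exists 0%N; rewrite /traverses /= inE. Qed.

Lemma reach_step y x z : reach y x -> z \in [seq u.1 | u <- g x] -> reach y z.
Proof.
case=> L HL Hz; exists L.+1; rewrite /traverses iterS mem_apply.
move: HL; rewrite /traverses => /mapP [x0 Hx0 Ex].
by apply/hasP; exists x0 => //; rewrite -Ex.
Qed.

Lemma reach_trans y x z : reach y x -> reach x z -> reach y z.
Proof.
move=> Hyx [L]; elim: L z => [|L IH] z.
  by rewrite /traverses /= inE => /eqP ->.
rewrite /traverses iterS mem_apply => /hasP [x0 Hx0 Hz].
apply: reach_step (IH x0.1 _) Hz.
by rewrite /traverses; apply/mapP; exists x0.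
Qed.
End Gen.

Lemma split_step (E : eqType) (g : E -> seq (E * bool)) y x t :
  size (phi (size (g x)) y) = size (g x) -> (t < size (g x))%N ->
  ((nth (lo La) (phi (size (g x)) y) t).1, (nth (x, true) (g x) t).1)
    \in [seq u.1 | u <- split_map g (y, x)].
Proof.
move=> Hs Ht; rewrite /split_map -map_comp.
apply/mapP; exists (nth (lo La, (x,true)) (zip (phi (size (g x)) y) (g x)) t).
  by apply: mem_nth; rewrite size_zip Hs minnn.
by rewrite nth_zip.
Qed.

Lemma split_step1 (E : eqType) (g : E -> seq (E * bool)) y x x' b :
  g x = [:: (x', b)] -> reach (split_map g) (y, x) (y, x').
Proof.
move=> Hg; apply: reach_step (reach_refl _ _) _.
have := @split_step E g y x 0 _ _; rewrite Hg /=; apply => //.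
Qed.

Lemma rep_S (T : Type) n (s : seq (T * bool)) : rep n.+1 s = s ++ rep n s.
Proof. by []. Qed.

Lemma nth_rep2 (T : Type) (d p q : T * bool) n t : (t < 2 * n)%N ->
  nth d (rep n [:: p; q]) t = if odd t then q else p.
Proof.
elim: n t => [|n IH] t; first by rewrite muln0.
rewrite rep_S; case: t => [|[|t]] //= Ht.
rewrite IH //; first by rewrite negbK.
by rewrite mulnS !ltnS in Ht.
Qed.

Lemma size_rep (T : Type) n (s : seq (T * bool)) : size (rep n s) = n * size s.
Proof. by elim: n => [|n IH] //=; rewrite size_cat IH mulSn. Qed.

Lemma size_fb (T : Type) (u : seq T) : size (flatten (map (@bf T) u)) = (size u).*2.
Proof. by elim: u => [|x u IH] //=; rewrite IH doubleS. Qed.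

Lemma nth_fb (T : Type) (x0 : T) d (u : seq T) i :
  i < size u -> nth d (flatten (map (@bf T) u)) i.*2 = (nth x0 u i, true) /\
                nth d (flatten (map (@bf T) u)) i.*2.+1 = (nth x0 u i, false).
Proof. elim: u i => [|x u IH] [|i] Hi //; rewrite doubleS /=; exact: IH. Qed.

Lemma rep_fb (T : Type) n (x : T) : rep n (bf x) = flatten (map (@bf T) (nseq n x)).
Proof. by elim: n => [|n IH] //=; rewrite rep_S IH. Qed.

Definition f0 y := match y with La => lo La | Lb => lo Lb | Lc => lo Lc | Ld => lo La
  | Le => lo Lc | Lf => lo La | Lg => lo Lb end.
Definition f1 y := match y with La => up Lg | Lb => up Ld | Lc => up Lf | Ld => up Lb
  | Le => up Lb | Lf => up Lc | Lg => up Le end.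
Definition fp y := match y with La => lo La | Lb => lo Lb | Lc => lo Lc | Ld => lo La
  | Le => lo La | Lf => lo La | Lg => lo Lb end.
Definition fq y := match y with La => up Lb | Lb => up Lc | Lc => up La | Ld => up Lb
  | Le => up Lb | Lf => up Lb | Lg => up La end.
Definition fl y := match y with La => lo La | Lb => lo Lb | Lc => lo Lc | Ld => lo La
  | Le => lo La | Lf => lo La | Lg => lo Lb end.

Lemma phi_odd_eq m' y :
  phi_odd m' y = [:: f0 y; f1 y] ++ rep m' [:: fp y; fq y] ++ [:: fl y].
Proof. by case: y. Qed.

Lemma size_phi_odd m' y : size (phi_odd m' y) = (m'.*2 + 3)%N.
Proof. rewrite phi_odd_eq /= size_cat size_rep /=. lia. Qed.

Lemma nth_phi_rep m' y i : i < m' ->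
  nth (lo La) (phi_odd m' y) (i.*2.+2) = fp y /\
  nth (lo La) (phi_odd m' y) (i.*2.+3) = fq y.
Proof.
move=> Hi; rewrite phi_odd_eq /= !nth_cat size_rep /=.
have -> : i.*2 < m' * 2 by lia.
have -> : i.*2.+1 < m' * 2 by lia.
rewrite !nth_rep2 /= ?odd_double //; lia.
Qed.

Lemma nth_phi_last m' y :
  nth (lo La) (phi_odd m' y) (m'.*2.+2) = fl y.
Proof.
rewrite phi_odd_eq /= nth_cat size_rep /=.
have -> : (m'.*2 < m' * 2) = false by lia.
have -> : m'.*2 - m' * 2 = 0 by lia. done.
Qed.

Section Star.
Variables (N M n0 m : nat) (e : nat -> nat -> nat) (ordk : nat -> seq nat).
Hypothesis hN : 0 < N.
Hypothesis hM : 2 <= M.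
Hypothesis hord : forall k, k < m -> perm_eq (ordk k) [seq j <- iota 0 m | j != k].

Notation F := (f_lambda N M n0 e ordk).
Notation G := (split_map F).
Notation V y c k i := (y, (c, (k, i))).

Definition U k := nseq (e k k).+1 (k, 1) ++
   flatten [seq nseq (e k j).+1 (j, 1) | j <- ordk k] ++ [:: (k, 2)].

Lemma W_eq k : f_mu M n0 e ordk (k, M) =
   flatten (map (@bf _) (U k)) ++ [:: ((k, n0.+1), true)].
Proof.
have H : flatten [seq rep (e k j).+1 (bf (j,1)) | j <- ordk k] =
   flatten (map (@bf _) (flatten [seq nseq (e k j).+1 (j, 1) | j <- ordk k])).
  elim: (ordk k) => [|j l IH] //.
  have -> : flatten [seq rep (e k j0).+1 (bf (j0,1)) | j0 <- j :: l] =
    rep (e k j).+1 (bf (j,1)) ++ flatten [seq rep (e k j0).+1 (bf (j0,1)) | j0 <- l] by [].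
  have -> : flatten [seq nseq (e k j0).+1 (j0, 1) | j0 <- j :: l] =
    nseq (e k j).+1 (j, 1) ++ flatten [seq nseq (e k j0).+1 (j0, 1) | j0 <- l] by [].
  by rewrite IH rep_fb map_cat flatten_cat.
rewrite /f_mu ltnn /U H !map_cat !flatten_cat rep_fb -!catA.
reflexivity.
Qed.

Lemma size_U k : 2 <= size (U k).
Proof. rewrite /U !size_cat /= size_nseq; lia. Qed.

Lemma F_top k : F (N.-1, (k, M)) =
  [seq ((0, y.1), y.2) | y <- flatten (map (@bf _) (U k)) ++ [:: ((k, n0.+1), true)]].
Proof. rewrite -W_eq /f_lambda; have -> : ((N.-1, (k,M)).1.+1 < N) = false by rewrite /= prednK // ltnn. done. Qed.

Lemma top_gen y k t : t < (size (U k)).*2 ->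
  reach G (V y N.-1 k M)
    ((nth (lo La) (phi_odd (size (U k)).-1 y) t).1,
     (0, (nth ((0,0),true) (flatten (map (@bf _) (U k))) t).1)).
Proof.
move=> Ht; apply: reach_step (reach_refl _ _) _.
have Hs : size (F (N.-1, (k, M))) = ((size (U k)).*2 + 1)%N.
  by rewrite F_top size_map size_cat size_fb addn1.
have Hphi : phi (size (F (N.-1, (k, M)))) y = phi_odd (size (U k)).-1 y.
  rewrite Hs /phi; have := size_U k => Hu.
  have -> : ((size (U k)).*2 + 1 == 1) = false by lia.
  have -> : odd ((size (U k)).*2 + 1) by rewrite addn1 /= odd_double.
  have -> : 3 <= (size (U k)).*2 + 1 by lia.
  have -> : ((size (U k)).*2 + 1 - 3) = ((size (U k)).-1).*2 by lia.
  by rewrite doubleK.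
have := @split_step _ F y (N.-1, (k, M)) t.
rewrite Hphi Hs size_phi_odd.
have Hu := size_U k.
have H1 : (size (U k)).-1.*2 + 3 = (size (U k)).*2 + 1 by lia.
have H2 : t < (size (U k)).*2 + 1 by lia.
move=> /(_ H1 H2).
have Hsz : t < size (flatten (map (@bf _) (U k)) ++ [:: ((k, n0.+1), true)]).
  by rewrite size_cat size_fb.
rewrite F_top (nth_map ((0,0),true) _ _ Hsz).
by rewrite nth_cat size_fb Ht.
Qed.

Lemma top_i y k i : i < size (U k) ->
  reach G (V y N.-1 k M) ((nth (lo La) (phi_odd (size (U k)).-1 y) i.*2).1, (0, nth (0,0) (U k) i)) /\ reach G (V y N.-1 k M) ((nth (lo La) (phi_odd (size (U k)).-1 y) i.*2.+1).1, (0, nth (0,0) (U k) i)).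
Proof.
move=> Hi; have [E1 E2] := nth_fb (0,0) ((0,0),true) Hi.
split.
  have := @top_gen y k i.*2; rewrite E1; apply; lia.
have := @top_gen y k i.*2.+1; rewrite E2; apply; lia.
Qed.

Lemma top_first y k :
  reach G (V y N.-1 k M) ((f0 y).1, (0, (k, 1))) /\ reach G (V y N.-1 k M) ((f1 y).1, (0, (k, 1))).
Proof.
have Hu := size_U k.
have [H1 H2] := @top_i y k 0 (ltnW Hu).
by rewrite phi_odd_eq in H1 H2.
Qed.

Lemma top_last y k :
  reach G (V y N.-1 k M) ((fp y).1, (0, (k, 2))) /\ reach G (V y N.-1 k M) ((fq y).1, (0, (k, 2))).
Proof.
have Hu := size_U k.
have Hi : (size (U k)).-1 < size (U k) by lia.
have [H1 H2] := @top_i y k _ Hi.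
have EU : nth (0,0) (U k) (size (U k)).-1 = (k, 2).
  by rewrite nth_last /U !last_cat.
have Hm : (size (U k)).-2 < (size (U k)).-1 by lia.
have [P1 P2] := nth_phi_rep y Hm.
have E : ((size (U k)).-1).*2 = ((size (U k)).-2).*2.+2 by lia.
rewrite EU E P1 in H1. rewrite EU E P2 in H2. by split.
Qed.

Lemma top_all y k j : k < m -> j < m -> (y == La) || (y == Lb) || (y == Lc) ->
  reach G (V y N.-1 k M) (y, (0, (j, 1))).
Proof.
move=> Hk Hj Hy.
have Hin : (j, 1) \in U k.
  rewrite /U !mem_cat; case: (eqVneq j k) => [->|Hjk].
    by rewrite mem_nseq eqxx.
  apply/orP; right; apply/orP; left.
  apply/flatten_mapP; exists j; last by rewrite mem_nseq eqxx.
  by rewrite (perm_mem (hord Hk)) mem_filter Hjk mem_iota.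
have Hi : index (j, 1) (U k) < size (U k) by rewrite index_mem.
have [H1 _] := @top_i y k _ Hi.
rewrite nth_index // in H1.
move: H1; case E : (index (j, 1) (U k)) => [|i].
  by rewrite phi_odd_eq; case: y Hy.
have Hm : i < (size (U k)).-1 by lia.
have [P1 _] := nth_phi_rep y Hm.
rewrite doubleS P1; by case: y Hy P1.
Qed.

Lemma step_up y c k i : c.+1 < N -> reach G (V y c k i) (V y c.+1 k i).
Proof. move=> H; apply: split_step1; by rewrite /f_lambda /= H. Qed.

Lemma step_wrap y k i : i < M -> reach G (V y N.-1 k i) (V y 0 k i.+1).
Proof.
move=> H; apply: split_step1.
rewrite /f_lambda; have -> : ((N.-1, (k,i)).1.+1 < N) = false by rewrite /= prednK // ltnn.
by rewrite /= H.
Qed.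

Lemma up_c y c k i : c < N -> reach G (V y c k i) (V y N.-1 k i).
Proof.
move=> Hc; have [d Hd] : exists d, c + d = N.-1 by exists (N.-1 - c); lia.
elim: d c Hc Hd => [|d IH] c Hc Hd.
  by rewrite addn0 in Hd; rewrite Hd; apply: reach_refl.
have H1 : c.+1 < N by lia.
apply: reach_trans (step_up y k i H1) (IH c.+1 _ _); lia.
Qed.

Lemma up_i y k i : 0 < i <= M -> reach G (V y N.-1 k i) (V y N.-1 k M).
Proof.
move=> Hi; have [d Hd] : exists d, i + d = M by exists (M - i); lia.
elim: d i Hi Hd => [|d IH] i Hi Hd.
  by rewrite addn0 in Hd; rewrite Hd; apply: reach_refl.
have Him : i < M by lia.
apply: (reach_trans (x := V y 0 k i.+1)); first exact: step_wrap.
apply: (reach_trans (x := V y N.-1 k i.+1)).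
  apply: up_c; lia.
apply: IH; lia.
Qed.

Lemma up_all y c k i : c < N -> 0 < i <= M -> reach G (V y c k i) (V y N.-1 k M).
Proof.
move=> Hc Hi; apply: (reach_trans (x := V y N.-1 k i)); first exact: up_c.
exact: up_i.
Qed.

Lemma down_c y c k i : c < N -> reach G (V y 0 k i) (V y c k i).
Proof.
elim: c => [|c IH] Hc; first exact: reach_refl.
apply: (reach_trans (x := V y c k i)); first by apply: IH; lia.
exact: step_up.
Qed.

Lemma down_i y k i : 0 < i <= M -> reach G (V y 0 k 1) (V y 0 k i).
Proof.
elim: i => [|i IH] // /andP [_ Hi].
case: i IH Hi => [|i] IH Hi; first exact: reach_refl.
apply: (reach_trans (x := V y 0 k i.+1)); first by apply: IH; lia.
apply: (reach_trans (x := V y N.-1 k i.+1)).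
  apply: down_c; lia.
apply: step_wrap; lia.
Qed.

Lemma down_all y c k i : c < N -> 0 < i <= M -> reach G (V y 0 k 1) (V y c k i).
Proof.
move=> Hc Hi; apply: (reach_trans (x := V y 0 k i)); first exact: down_i.
exact: down_c.
Qed.


Lemma up0 y k i : 0 < i <= M -> reach G (V y 0 k i) (V y N.-1 k M).
Proof. by apply: up_all. Qed.

Lemma hubA k : k < 0 + m -> reach G (V La N.-1 k M) (V La 0 0 1).
Proof. move=> Hk; apply: top_all => //; lia. Qed.

Lemma A2 k : k < m -> reach G (V La 0 k 2) (V La 0 0 1).
Proof.
move=> Hk; apply: (reach_trans (x := V La N.-1 k M)); first by apply: up0; lia.
by apply: hubA.
Qed.

Lemma to_hub y k : k < m -> reach G (V y N.-1 k M) (V La 0 0 1).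
Proof.
move=> Hk.
have HA := A2 Hk.
case: y.
- exact: hubA.
- apply: (reach_trans (x := V Lc 0 k 2)); first exact: (top_last Lb k).2.
  apply: (reach_trans (x := V Lc N.-1 k M)); first by apply: up0; lia.
  apply: (reach_trans (x := V La 0 k 2)) => //; exact: (top_last Lc k).2.
- apply: (reach_trans (x := V La 0 k 2)) => //; exact: (top_last Lc k).2.
- apply: (reach_trans (x := V La 0 k 2)) => //; exact: (top_last Ld k).1.
- apply: (reach_trans (x := V La 0 k 2)) => //; exact: (top_last Le k).1.
- apply: (reach_trans (x := V La 0 k 2)) => //; exact: (top_last Lf k).1.
- apply: (reach_trans (x := V La 0 k 2)) => //; exact: (top_last Lg k).2.
Qed.

Lemma from_hub z k : 0 < m -> k < m -> reach G (V La 0 0 1) (V z 0 k 1).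
Proof.
move=> Hm Hk.
have T0 : forall y k, k < m -> reach G (V y 0 k 1) (V y N.-1 k M).
  by move=> y k' _; apply: up0; lia.
have HA : forall k, k < m -> reach G (V La 0 0 1) (V La 0 k 1).
  move=> k' Hk'; apply: (reach_trans (x := V La N.-1 0 M)); first exact: T0.
  by apply: top_all.
have HB : forall k, k < m -> reach G (V La 0 0 1) (V Lb 0 k 1).
  move=> k' Hk'; apply: (reach_trans (x := V La N.-1 0 M)); first exact: T0.
  apply: (reach_trans (x := V Lb 0 0 2)); first exact: (top_last La 0).2.
  apply: (reach_trans (x := V Lb N.-1 0 M)); first by apply: up0; lia.
  by apply: top_all.
have HC : forall k, k < m -> reach G (V La 0 0 1) (V Lc 0 k 1).
  move=> k' Hk'; apply: (reach_trans (x := V Lb N.-1 0 M)).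
    apply: (reach_trans (x := V Lb 0 0 1)); [exact: HB | exact: T0].
  apply: (reach_trans (x := V Lc 0 0 2)); first exact: (top_last Lb 0).2.
  apply: (reach_trans (x := V Lc N.-1 0 M)); first by apply: up0; lia.
  by apply: top_all.
have HG : reach G (V La 0 0 1) (V Lg 0 k 1).
  apply: (reach_trans (x := V La N.-1 k M)).
    apply: (reach_trans (x := V La 0 k 1)); [exact: HA | exact: T0].
  exact: (top_first La k).2.
case: z.
- exact: HA.
- exact: HB.
- exact: HC.
- apply: (reach_trans (x := V Lb N.-1 k M)).
    apply: (reach_trans (x := V Lb 0 k 1)); [exact: HB | exact: T0].
  exact: (top_first Lb k).2.
- apply: (reach_trans (x := V Lg N.-1 k M)).
    apply: (reach_trans (x := V Lg 0 k 1)); [exact: HG | exact: T0].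
  exact: (top_first Lg k).2.
- apply: (reach_trans (x := V Lc N.-1 k M)).
    apply: (reach_trans (x := V Lc 0 k 1)); [exact: HC | exact: T0].
  exact: (top_first Lc k).2.
- exact: HG.
Qed.

Lemma ergo : ergodic (split_valid N m M) G.
Proof.
move=> [y [c [k i]]] [z [c' [k' i']]].
rewrite /split_valid /valid_edge /= => /and4P [Hc Hk Hi1 Hi2] /and4P [Hc' Hk' Hi1' Hi2'].
have Hm : 0 < m by lia.
have R : reach G (y, (c, (k, i))) (z, (c', (k', i'))).
  apply: (reach_trans (x := V y N.-1 k M)); first by apply: up_all => //; lia.
  apply: (reach_trans (x := V La 0 0 1)); first exact: to_hub.
  apply: (reach_trans (x := V z 0 k' 1)); first exact: from_hub.
  by apply: down_all => //; lia.
exact: R.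
Qed.

End Star.

Local Open Scope ring_scope.

Theorem mainTheorem9
  (lambda : algC) (hwp : weak_perron lambda)
  (N : nat) (hN : (0 < N)%N) (hP : perron (lambda ^+ N))
  (* KR_mu : generated by r_0, ..., r_{q-1} in O_mu *)
  (q : nat) (r : nat -> algC)
  (hr : forall j, (j < q)%N -> inO (lambda ^+ N) (r j))
  (hKR1 : forall x, inQF (lambda ^+ N) x -> inK (lambda ^+ N) x ->
            inQcone r q (lambda ^+ N * x))
  (hKR2 : forall x, inQcone r q x -> x != 0 -> inK (lambda ^+ N) x)
  (* generators s_0, ..., s_{m-1} of the semigroup (O_mu cap KR_mu) \ {0} *)
  (m : nat) (s : nat -> algC)
  (hs : forall k, (k < m)%N ->
          [/\ inO (lambda ^+ N) (s k), inQcone r q (s k) & s k != 0])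
  (hgen : forall x, inO (lambda ^+ N) x -> inQcone r q x -> x != 0 ->
            exists c : nat -> nat, x = \sum_(k < m) (c k)%:R * s k)
  (N' n0 : nat) (hn0 : (0 < n0)%N) (hN'n0 : (n0 < N')%N)
  (hcong : inO (lambda ^+ N) ((lambda ^+ N ^+ N' - lambda ^+ N ^+ n0) / 2))
  (p M : nat) (hM : M = (p * (N' - n0) + N')%N)
  (e : nat -> nat -> nat)
  (he : forall k, (k < m)%N ->
          lambda ^+ N ^+ M * s k =
            \sum_(i < m) ((2 * e k i + 2)%N%:R * s i)
            + 2 * lambda ^+ N * s k + lambda ^+ N ^+ n0 * s k)
  (ordk : nat -> seq nat)
  (hord : forall k, (k < m)%N -> perm_eq (ordk k) [seq j <- iota 0 m | j != k]) :
  ergodic (split_valid N m M) (split_map (f_lambda N M n0 e ordk)).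
Proof.
Proof.
have hM2 : (2 <= M)%N by rewrite hM; apply: leq_trans (leq_addl _ _); lia.
exact: (ergo n0 e hN hM2 hord).
Qed.
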